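(* Let $n\ge 1$ and let $A$ be a distributive meet-complemented lattice in which $\Box x$ and $\Diamond x$ exist for every $x\in A$ and such that $\Box^{n+1}a=\Box^n a$ for all $a\in A$. Then for every $a\in A$ the set $\{b\in A: b\le a \text{ and } b\vee\neg b=1\}$ has a maximum $Ba$, and $Ba=\Box^n a$.
   Context: A meet-complemented lattice is a lattice $(L,\le)$ such that for every $a\in L$ the element $\neg a=\max\{b\in L: a\wedge b\le c\ \text{for all } c\in L\}$ exists; it is bounded with bottom $0$ and top $1$. For $a\in L$, $\Box a=\max\{b\in L: a\vee\neg b=1\}$ and $\Diamond a=\min\{b\in L: \neg a\vee b=1\}$; $\Box^n$ is the $n$-fold composite of $\Box$. $Ba$ denotes the greatest Boolean element (element $b$ with $b\vee\neg b=1$) below $a$. *)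

(* Defs.v *)
From mathcomp Require Import all_boot all_order.
Set Implicit Arguments. Unset Strict Implicit. Unset Printing Implicit Defensive.
Import Order.TTheory.
Local Open Scope order_scope.

Definition is_max {d : Order.disp_t} {T : porderType d} (P : T -> Prop) (m : T) : Prop :=
  P m /\ (forall b, P b -> b <= m).

Definition is_min {d : Order.disp_t} {T : porderType d} (P : T -> Prop) (m : T) : Prop :=
  P m /\ (forall b, P b -> m <= b).

Definition is_meet_compl {d : Order.disp_t} {T : latticeType d} (neg : T -> T) : Prop :=
  forall a, is_max (fun b => forall c, a `&` b <= c) (neg a).

Definition is_box {d : Order.disp_t} {T : tbLatticeType d} (neg box : T -> T) : Prop :=
  forall a, is_max (fun b => a `|` neg b = \top) (box a).

Definition is_dia {d : Order.disp_t} {T : tbLatticeType d} (neg dia : T -> T) : Prop :=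
  forall a, is_min (fun b => neg a `|` b = \top) (dia a).

(* Main.v *)
Require Import Defs.
From mathcomp Require Import all_boot all_order.
Import Order.TTheory.
Local Open Scope order_scope.

Theorem proposition25 (d : Order.disp_t) (T : tbDistrLatticeType d) (n : nat)
  (hn : (1 <= n)%N) (neg box dia : T -> T)
  (Hneg : is_meet_compl neg) (Hbox : is_box neg box) (Hdia : is_dia neg dia)
  (Hstab : forall a : T, iter n.+1 box a = iter n box a) :
  forall a : T,
    is_max (fun b => b <= a /\ b `|` neg b = \top) (iter n box a).
Proof.
have mneg : forall x : T, x `&` neg x = \bot.
  by move=> x; apply/eqP; rewrite -lex0; apply: (Hneg x).1.
have boxle : forall x : T, box x <= x.
  move=> x; have h := (Hbox x).1.
  have e : box x = box x `&` x.
    by rewrite -[in LHS](meetx1 (box x)) -h meetUr mneg joinx0.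
  by rewrite e leIr.
move=> a; split; [split|].
- elim: n {hn Hstab} => [|k IH] //=.
  exact: le_trans (boxle _) IH.
- have h := (Hbox (iter n box a)).1.
  by move: h; rewrite -/(iter n.+1 box a) Hstab.
- move=> b [ba bb].
  elim: n {hn Hstab} => [|k IH] //=.
  apply: (Hbox _).2; apply/eqP; rewrite eq_le lex1 /=.
  by rewrite -bb leU2 // lexx.
Qed.
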